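(* Fix a nonzero $\alpha\in A_{\infty_1}$, integers $N\ge 0$ and $l\in\{0,\dots,d-1\}$, and put $\varepsilon=q^{-dN-l}$ and $\delta=q^{-dN}\varepsilon$. Suppose $\delta<|\alpha|^{-1}$. Then for every $x\in\alpha\hat\Lambda_\varepsilon(f)$ one has $\operatorname{dist}(x,\hat\Lambda_\varepsilon(f))<|\alpha|\delta$, where $\hat\Lambda_\varepsilon(f):=f^{-N}\sqrt D\,\Lambda_\varepsilon(f)$ and $\operatorname{dist}(x,Y)=\inf_{y\in Y}|x-y|$.
   Context: Let $q$ be a power of a prime, $k=\mathbb F_q(T)$, $A=\mathbb F_q[T]$, $k_\infty=\mathbb F_q((1/T))$ with absolute value $|x|=q^{\deg_T x}$. For $x\in k_\infty$ let $\|x\|$ be the distance from $x$ to $A$, and for $f\in k_\infty$, $\varepsilon>0$ let $\Lambda_\varepsilon(f)=\{\lambda\in A:\|\lambda f\|<\varepsilon\}$. Let $f\in k_\infty\setminus k$ be a root of $X^2-aX-b$ with $a\in A$ monic, $d:=\deg_T a\ge1$, $b\in\mathbb F_q^*$, chosen with $|f|=q^d$ (its conjugate has absolute value $q^{-d}$). Let $D=a^2+4b$, with $\sqrt D$ chosen so that $f=(a+\sqrt D)/2$ in odd characteristic and $\sqrt D=a$ in characteristic $2$. Let $K=k(f)\subset k_\infty$, $\infty_1$ the place of $K$ induced by $K\subset k_\infty$, and $A_{\infty_1}$ the ring of elements of $K$ regular away from $\infty_1$ (one has $A_{\infty_1}=\mathbb F_q[f,fT,\dots,fT^{d-1}]$);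 absolute values of elements of $K$ are taken in $k_\infty$. *)

(* Defs.v *)
From HB Require Import structures.
From mathcomp Require Import all_boot all_order all_algebra.
From mathcomp Require Import boolp classical_sets reals.
Set Implicit Arguments.
Unset Strict Implicit.
Unset Printing Implicit Defensive.
Import Order.TTheory GRing.Theory Num.Theory.
Local Open Scope ring_scope.

(* k_oo = F((1/T)).  A Laurent series is represented by a pair (e, s)
   standing for  sum_{i >= 0} s i * T^(e - i).  Representations are not
   unique; [eqLS] is the equality of the underlying series (coefficientwise). *)
Definition LS (F : Type) := (int * (nat -> F))%type.

Section Laurent.
Variable F : finFieldType.

Definition lcoef (x : LS F) (n : int) : F :=
  if n <= x.1 then x.2 `|x.1 - n|%N else 0.

Definition eqLS (x y : LS F) : Prop := forall n : int, lcoef x n = lcoef y n.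

Definition mkLS (e : int) (c : int -> F) : LS F := (e, fun i : nat => c (e - i%:Z)).

Definition addLS (x y : LS F) : LS F :=
  mkLS (Num.max x.1 y.1) (fun n => lcoef x n + lcoef y n).
Definition oppLS (x : LS F) : LS F := (x.1, fun i => - x.2 i).
Definition subLS (x y : LS F) : LS F := addLS x (oppLS y).
Definition mulLS (x y : LS F) : LS F :=
  (x.1 + y.1, fun n => \sum_(i < n.+1) x.2 i * y.2 (n - i)%N).

Definition polyLS (p : {poly F}) : LS F :=
  mkLS (size p)%:Z (fun n => if 0 <= n then p`_`|n|%N else 0).
Definition cstLS (c : F) : LS F := polyLS c%:P.
Definition oneLS : LS F := cstLS 1.
Definition expLS (x : LS F) (n : nat) : LS F := iter n (mulLS x) oneLS.

Definition degLS (x : LS F) : option int :=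
  match pselect (exists i, x.2 i != 0) with
  | left H => Some (x.1 - (@ex_minn (fun i => x.2 i != 0) H)%:Z)
  | right _ => None
  end.

Definition absLS (R : realType) (x : LS F) : R :=
  match degLS x with Some v => (#|F|%:R : R) ^ v | None => 0 end.

Definition distA (R : realType) (x : LS F) : R :=
  inf [set r : R | exists p : {poly F}, r = absLS R (subLS x (polyLS p))].

Definition Lam (R : realType) (f : LS F) (eps : R) : set {poly F} :=
  [set lam | distA R (mulLS (polyLS lam) f) < eps].

Definition distLS (R : realType) (x : LS F) (Y : set (LS F)) : R :=
  inf [set r : R | exists y, Y y /\ r = absLS R (subLS x y)].

Inductive inAinf1 (d : nat) (f : LS F) : LS F -> Prop :=
| Ai_cst c : inAinf1 d f (cstLS c)
| Ai_gen i : (i < d)%N -> inAinf1 d f (mulLS f (polyLS 'X^i))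
| Ai_add x y : inAinf1 d f x -> inAinf1 d f y -> inAinf1 d f (addLS x y)
| Ai_mul x y : inAinf1 d f x -> inAinf1 d f y -> inAinf1 d f (mulLS x y)
| Ai_eq x y : eqLS x y -> inAinf1 d f x -> inAinf1 d f y.

(* sqrt D: f = (a + sqrt D)/2 in odd characteristic, sqrt D = a in char 2 *)
Definition sqrtD (a : {poly F}) (f : LS F) : LS F :=
  if (2%:R : F) == 0 then polyLS a
  else subLS (mulLS (cstLS 2%:R) f) (polyLS a).

Definition Lamhat (R : realType) (a : {poly F}) (f fi : LS F) (N : nat) (eps : R)
  : set (LS F) :=
  [set y | exists mu, @Lam R f eps mu /\
     y = mulLS (mulLS (expLS fi N) (sqrtD a f)) (polyLS mu)].

End Laurent.
Arguments Lam {F} R f eps.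
Arguments Lamhat {F} R a f fi N eps.

(* Main.v *)
Require Import Defs.
From HB Require Import structures.
From mathcomp Require Import all_boot all_order all_algebra.
From mathcomp Require Import boolp classical_sets reals.
From mathcomp Require Import zify.
Import Order.TTheory GRing.Theory Num.Theory.
Local Open Scope ring_scope.
Set Implicit Arguments. Unset Strict Implicit. Unset Printing Implicit Defensive.

Section LS.
Variable F : finFieldType.
Implicit Types x y z : LS F.

Lemma lcoefE x n : lcoef x n = if n <= x.1 then x.2 `|x.1 - n|%N else 0.
Proof. by []. Qed.

Lemma seq_lcoef x i : x.2 i = lcoef x (x.1 - i%:Z).
Proof. rewrite lcoefE ifT; last lia. congr (x.2 _); lia. Qed.

Lemma L_mk e (c : int -> F) n : lcoef (mkLS e c) n = if n <= e then c n else 0.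
Proof. rewrite lcoefE /=; case: ifP => // h; congr c; lia. Qed.

Lemma L_add x y n : lcoef (addLS x y) n = lcoef x n + lcoef y n.
Proof.
rewrite /addLS L_mk; case: ifPn => // h.
rewrite !lcoefE !ifF ?addr0 //; apply/negbTE; move: h; rewrite le_max negb_or => /andP[] //.
Qed.

Lemma L_opp x n : lcoef (oppLS x) n = - lcoef x n.
Proof. by rewrite !lcoefE /=; case: ifP; rewrite ?oppr0. Qed.

Definition same x y := x.1 = y.1 /\ forall i, x.2 i = y.2 i.
Lemma same_eq x y : same x y -> eqLS x y.
Proof. by case=> h1 h2 n; rewrite !lcoefE h1 h2. Qed.

Definition sh (k : nat) x : LS F := (x.1 + k%:Z, fun i => if (i < k)%N then 0 else x.2 (i - k)%N).
Lemma L_sh k x n : lcoef (sh k x) n = lcoef x n.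
Proof.
rewrite !lcoefE /=.
repeat (case: ifP => ?); first [done | lia | (congr (x.2 _); lia)].
Qed.

Lemma eqLS_refl x : eqLS x x. Proof. by []. Qed.
Lemma eqLS_sym x y : eqLS x y -> eqLS y x. Proof. by move=> h n. Qed.
Lemma eqLS_trans x y z : eqLS x y -> eqLS y z -> eqLS x z.
Proof. by move=> h1 h2 n; rewrite h1. Qed.

Definition cp (M : nat) (s : nat -> F) : {poly F} := \poly_(i < M) s i.

Lemma mulP x y n M : (n < M)%N -> (mulLS x y).2 n = (cp M x.2 * cp M y.2)`_n.
Proof.
move=> hM; rewrite coefM /=; apply: eq_bigr => i _.
rewrite !coef_poly !ifT //; apply: leq_ltn_trans hM; first exact: leq_subr.
by rewrite -ltnS.
Qed.

Lemma coefM_ext (p p' q : {poly F}) n :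
  (forall k, (k <= n)%N -> p`_k = p'`_k) -> (p * q)`_n = (p' * q)`_n.
Proof.
move=> h; rewrite !coefM; apply: eq_bigr => i _; rewrite h //.
by rewrite -ltnS.
Qed.

Lemma sh_mul k x y : same (mulLS (sh k x) y) (sh k (mulLS x y)).
Proof.
split; first by rewrite /= addrAC.
move=> n; rewrite (mulP _ _ (ltnSn n)).
rewrite (@coefM_ext (cp n.+1 (sh k x).2) ('X^k * cp n.+1 x.2) (cp n.+1 y.2) n); last first.
  move=> j hj; have hj' : (j < n.+1)%N by rewrite ltnS.
  have hj'' : (j - k < n.+1)%N by rewrite ltnS (leq_trans (leq_subr _ _) hj).
  by rewrite coefXnM !coef_poly /= hj' hj''.
rewrite -mulrA coefXnM /=; case: ifP => // _.
by symmetry; exact: (mulP x y (leq_ltn_trans (leq_subr k n) (ltnSn n))).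
Qed.

Lemma mulC_same x y : same (mulLS x y) (mulLS y x).
Proof.
split; first by rewrite /= addrC.
by move=> n; rewrite !(mulP _ _ (ltnSn n)) mulrC.
Qed.

Lemma mulA_same x y z : same (mulLS (mulLS x y) z) (mulLS x (mulLS y z)).
Proof.
split; first by rewrite /= addrA.
move=> n; rewrite !(mulP _ _ (ltnSn n)).
rewrite (@coefM_ext (cp n.+1 (mulLS x y).2) (cp n.+1 x.2 * cp n.+1 y.2) (cp n.+1 z.2) n); last first.
  move=> j hj; have hj' : (j < n.+1)%N by rewrite ltnS.
  by rewrite coef_poly hj' (mulP _ _ hj').
rewrite [cp _ x.2 * cp _ (mulLS y z).2]mulrC.
rewrite (@coefM_ext (cp n.+1 (mulLS y z).2) (cp n.+1 y.2 * cp n.+1 z.2) (cp n.+1 x.2) n); last first.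
  move=> j hj; have hj' : (j < n.+1)%N by rewrite ltnS.
  by rewrite coef_poly hj' (mulP _ _ hj').
by rewrite [cp n.+1 y.2 * _ * _]mulrC mulrA.
Qed.

Lemma mul_ext x x' y : x.1 = x'.1 -> (forall i, x.2 i = x'.2 i) -> same (mulLS x y) (mulLS x' y).
Proof.
move=> h1 h2; split; first by rewrite /= h1.
by move=> n /=; apply: eq_bigr => i _; rewrite h2.
Qed.

Lemma eq_sh_same x x' : eqLS x x' -> x.1 <= x'.1 -> same x' (sh `|x'.1 - x.1|%N x).
Proof.
move=> h hle; have e1 : x'.1 = (sh `|x'.1 - x.1|%N x).1 by rewrite /=; lia.
split => // i; rewrite [RHS]seq_lcoef L_sh -e1 h -seq_lcoef //.
Qed.

Lemma mul_congr_l x x' y : eqLS x x' -> eqLS (mulLS x y) (mulLS x' y).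
Proof.
wlog hle : x x' / x.1 <= x'.1.
  move=> W h; case: (lerP x.1 x'.1) => hl; first exact: W.
  by apply: eqLS_sym; apply: W; [exact: ltW | exact: eqLS_sym].
move=> h; have [s1 s2] := eq_sh_same h hle.
apply: eqLS_sym; apply: (@eqLS_trans _ (mulLS (sh `|x'.1 - x.1|%N x) y)).
  exact/same_eq/mul_ext.
apply: eqLS_trans; first exact/same_eq/sh_mul.
by move=> n; rewrite L_sh.
Qed.

Lemma mul_congr_r x y y' : eqLS y y' -> eqLS (mulLS x y) (mulLS x y').
Proof.
move=> h; apply: (eqLS_trans (same_eq (mulC_same _ _))).
apply: eqLS_trans; first exact: mul_congr_l h.
exact: same_eq (mulC_same _ _).
Qed.

Lemma L_poly (p : {poly F}) n : lcoef (polyLS p) n = if 0 <= n then p`_`|n|%N else 0.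
Proof.
rewrite /polyLS L_mk; case: ifP => // h; case: ifP => // h0.
rewrite nth_default //; move/negbT: h; rewrite -ltNge => h.
by move: h; case: (size p) => [|m] h; lia.
Qed.

Definition mono (c : F) (k : int) : LS F := (k, fun i => if i == 0%N then c else 0).

Lemma L_mono c k n : lcoef (mono c k) n = if n == k then c else 0.
Proof.
rewrite lcoefE /=; repeat (case: ifP => ?); first [done | lia].
Qed.

Lemma mono_seq c k x i : (mulLS (mono c k) x).2 i = c * x.2 i.
Proof.
rewrite /= big_ord_recl /= subn0 big1 ?addr0 // => j _.
by rewrite /bump /= mul0r.
Qed.

Lemma M_mono c k x n : lcoef (mulLS (mono c k) x) n = c * lcoef x (n - k).
Proof.
rewrite lcoefE mono_seq lcoefE /=.
repeat (case: ifP => ?); rewrite ?mulr0 //; try lia.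
congr (c * x.2 _); lia.
Qed.

Lemma one_mono : eqLS (oneLS F) (mono 1 0).
Proof. by move=> n; rewrite L_poly L_mono coefC; repeat (case: ifP => ?); first [done | lia]. Qed.

Lemma mul1LS x : eqLS (mulLS (oneLS F) x) x.
Proof.
apply: eqLS_trans; first exact: mul_congr_l one_mono.
by move=> n; rewrite M_mono mul1r subr0.
Qed.

Definition padd x y : LS F := (x.1, fun i => x.2 i + y.2 i).

Lemma padd_eq x y : x.1 = y.1 -> eqLS (padd x y) (addLS x y).
Proof.
move=> h n; rewrite L_add !lcoefE /= h; by case: ifP; rewrite ?addr0.
Qed.

Lemma mul_padd x y z : same (mulLS (padd x y) z) (padd (mulLS x z) (mulLS y z)).
Proof.
split => // n /=; rewrite -big_split /=; apply: eq_bigr => i _; exact: mulrDl.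
Qed.

Lemma add_congr x x' y y' : eqLS x x' -> eqLS y y' -> eqLS (addLS x y) (addLS x' y').
Proof. by move=> h1 h2 n; rewrite !L_add h1 h2. Qed.

Lemma distrLS x y z : eqLS (mulLS (addLS x y) z) (addLS (mulLS x z) (mulLS y z)).
Proof.
pose E := Num.max x.1 y.1.
have hx : x.1 <= E by rewrite le_max lexx.
have hy : y.1 <= E by rewrite le_max lexx orbT.
pose x' := sh `|E - x.1|%N x; pose y' := sh `|E - y.1|%N y.
have ex : x'.1 = E by rewrite /=; lia.
have ey : y'.1 = E by rewrite /=; lia.
have Ex : eqLS x' x by move=> n; rewrite L_sh.
have Ey : eqLS y' y by move=> n; rewrite L_sh.
apply: (@eqLS_trans _ (mulLS (padd x' y') z)).
  apply: mul_congr_l; apply: eqLS_sym; apply: eqLS_trans; first by apply: padd_eq; rewrite ex ey.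
  exact: add_congr.
apply: eqLS_trans; first exact/same_eq/mul_padd.
apply: eqLS_trans; first by apply: padd_eq; exact: (congr1 (fun t => t + z.1) (etrans ex (esym ey))).
by apply: add_congr; apply: mul_congr_l.
Qed.

End LS.

From Stdlib Require Import Ring Setoid Morphisms.

Section LSRing.
Variable F : finFieldType.
Definition z0 : LS F := cstLS 0.

#[local] Instance eqLS_Equiv : Equivalence (@eqLS F).
Proof. split; [exact: eqLS_refl | exact: eqLS_sym | exact: eqLS_trans]. Qed.
#[local] Instance addP : Proper (@eqLS F ==> @eqLS F ==> @eqLS F) (@addLS F).
Proof. move=> x x' h y y' h'; exact: add_congr. Qed.
#[local] Instance mulP' : Proper (@eqLS F ==> @eqLS F ==> @eqLS F) (@mulLS F).
Proof. move=> x x' h y y' h'; apply: eqLS_trans; [exact: mul_congr_l h | exact: mul_congr_r]. Qed.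
#[local] Instance oppP : Proper (@eqLS F ==> @eqLS F) (@oppLS F).
Proof. by move=> x x' h n; rewrite !L_opp h. Qed.
#[local] Instance subP : Proper (@eqLS F ==> @eqLS F ==> @eqLS F) (@subLS F).
Proof. move=> x x' h y y' h'; apply: add_congr => //; exact: oppP. Qed.

Lemma L_z0 n : lcoef z0 n = 0.
Proof. by rewrite L_poly coefC; case: ifP => //; case: ifP. Qed.

Lemma LSth : ring_theory z0 (oneLS F) (@addLS F) (@mulLS F) (@subLS F) (@oppLS F) (@eqLS F).
Proof.
split.
- by move=> x n; rewrite L_add L_z0 add0r.
- by move=> x y n; rewrite !L_add addrC.
- by move=> x y z n; rewrite !L_add addrA.
- exact: mul1LS.
- move=> x y; exact/same_eq/mulC_same.
- move=> x y z; apply: eqLS_sym; exact/same_eq/mulA_same.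
- exact: distrLS.
- by [].
- by move=> x n; rewrite L_add L_opp L_z0 subrr.
Qed.

Lemma LSext : ring_eq_ext (@addLS F) (@mulLS F) (@oppLS F) (@eqLS F).
Proof. split; [exact: addP | exact: mulP' | exact: oppP]. Qed.

Add Ring LSring : LSth (setoid eqLS_Equiv LSext).


Implicit Types p q : {poly F}.
Implicit Types x y z : LS F.
Lemma poly_add p q : eqLS (polyLS (p + q)) (addLS (polyLS p) (polyLS q)).
Proof. move=> n; rewrite L_add !L_poly coefD; by case: ifP; rewrite ?addr0. Qed.
Lemma poly_opp p : eqLS (polyLS (- p)) (oppLS (polyLS p)).
Proof. move=> n; rewrite L_opp !L_poly coefN; by case: ifP; rewrite ?oppr0. Qed.
Lemma poly0 : eqLS (polyLS 0) z0.
Proof. by rewrite /z0 /cstLS polyC0. Qed.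
Lemma cst_mono (c : F) : eqLS (polyLS c%:P) (mono c 0).
Proof. by move=> n; rewrite L_poly L_mono coefC; repeat (case: ifP => ?); first [done | lia]. Qed.
Lemma poly_C_mul (c : F) q : eqLS (polyLS (c%:P * q)) (mulLS (polyLS c%:P) (polyLS q)).
Proof.
apply: eqLS_sym; apply: eqLS_trans; first exact: mul_congr_l (cst_mono c).
move=> n; rewrite M_mono subr0 !L_poly coefCM; by case: ifP; rewrite ?mulr0.
Qed.
Lemma X_mono : eqLS (polyLS (F:=F) 'X) (mono 1 1).
Proof.
move=> n; rewrite L_poly L_mono coefX; case: (n =P 1) => [->//|h].
case: ifP => // h0; suff -> : (`|n|%N == 1%N) = false by [].
apply/negbTE/eqP; lia.
Qed.
Lemma poly_X_mul q : eqLS (polyLS ('X * q)) (mulLS (polyLS 'X) (polyLS q)).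
Proof.
apply: eqLS_sym; apply: eqLS_trans; first exact: mul_congr_l X_mono.
move=> n; rewrite M_mono mul1r !L_poly coefXM.
repeat (case: ifP => ?); try lia; try done.
by congr (q`_ _); lia.
Qed.
Lemma poly_mul p q : eqLS (polyLS (p * q)) (mulLS (polyLS p) (polyLS q)).
Proof.
elim/poly_ind: p q => [|p c IH] q.
  rewrite mul0r; setoid_rewrite poly0; ring.
have -> : (p * 'X + c%:P) * q = p * ('X * q) + c%:P * q.
  by rewrite mulrDl -mulrA.
setoid_rewrite poly_add; setoid_rewrite IH; setoid_rewrite poly_X_mul.
setoid_rewrite poly_C_mul. ring.
Qed.

Lemma deg_some x v : degLS x = Some v -> lcoef x v != 0 /\ forall n, v < n -> lcoef x n = 0.
Proof.
rewrite /degLS; case: pselect => [H|H] // [<-]; case: ex_minnP => m hm hmin.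
split; first by rewrite -seq_lcoef.
move=> n hn; rewrite lcoefE; case: ifP => // h.
apply/eqP; apply/negP => /negP h'; have := hmin _ h'; lia.
Qed.

Lemma deg_none x : degLS x = None -> forall n, lcoef x n = 0.
Proof.
rewrite /degLS; case: pselect => [H|H] // _ n; rewrite lcoefE; case: ifP => // _.
by case: (eqVneq (x.2 `|x.1 - n|%N) 0) => // h; exfalso; apply: H; eexists; exact: h.
Qed.

Lemma deg_eq x y : eqLS x y -> degLS x = degLS y.
Proof.
move=> h; case ex: (degLS x) => [v|]; case ey: (degLS y) => [w|].
- have [h1 h2] := deg_some ex; have [h3 h4] := deg_some ey.
  case: (ltrgtP v w) => [l|l|->//].
  + by move: h3; rewrite -h h2 ?eqxx.
  + by move: h1; rewrite h h4 ?eqxx.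
- by have [h1 _] := deg_some ex; move: h1; rewrite h deg_none ?eqxx.
- by have [h1 _] := deg_some ey; move: h1; rewrite -h deg_none ?eqxx.
- by [].
Qed.

Lemma deg_seq x m : x.2 m != 0 -> (forall i, (i < m)%N -> x.2 i = 0) -> degLS x = Some (x.1 - m%:Z).
Proof.
move=> hm hlt; rewrite /degLS; case: pselect => [H|H]; last by exfalso; apply: H; exists m.
congr Some; congr (_ - _); case: ex_minnP => m' hm' hmin; congr Posz.
apply/eqP; rewrite eqn_leq (hmin _ hm) /= leqNgt; apply/negP => h.
by move: hm'; rewrite hlt ?eqxx.
Qed.

Lemma deg_none_seq x : (forall i, x.2 i = 0) -> degLS x = None.
Proof.
move=> h; rewrite /degLS; case: pselect => [H|//]; exfalso; case: H => i; by rewrite h eqxx.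
Qed.

Lemma deg_some_seq x v : degLS x = Some v ->
  exists m, [/\ v = x.1 - m%:Z, x.2 m != 0 & forall i, (i < m)%N -> x.2 i = 0].
Proof.
move=> /deg_some [h1 h2].
have hv : v <= x.1 by move: h1; rewrite lcoefE; case: ifP => //; rewrite eqxx.
exists `|x.1 - v|%N; split; first by lia.
  by rewrite seq_lcoef; have -> : x.1 - `|x.1 - v|%N%:Z = v by lia.
move=> i hi; rewrite seq_lcoef h2 //; lia.
Qed.

Lemma deg_none_seq' x : degLS x = None -> forall i, x.2 i = 0.
Proof. by move=> h i; rewrite seq_lcoef deg_none. Qed.

Lemma deg_mul x y : degLS (mulLS x y) =
  match degLS x, degLS y with Some a, Some b => Some (a + b) | _, _ => None end.
Proof.
case ex: (degLS x) => [a|]; case ey: (degLS y) => [b|].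
- have [mx [-> hx1 hx2]] := deg_some_seq ex.
  have [my [-> hy1 hy2]] := deg_some_seq ey.
  have -> : x.1 - mx%:Z + (y.1 - my%:Z) = (mulLS x y).1 - (mx + my)%N%:Z by rewrite /=; lia.
  apply: deg_seq.
    rewrite /= (bigD1 (Ordinal (leq_ltn_trans (leq_addr my mx) (ltnSn _)))) //= big1.
      by rewrite addr0 addKn mulf_neq0.
    move=> i /eqP hi; case: (ltnP i mx) => h; first by rewrite hx2 ?mul0r.
    rewrite hy2 ?mulr0 //.
    have : (nat_of_ord i <> mx) by move=> e; apply: hi; apply: val_inj.
    have := ltn_ord i; lia.
  move=> n hn; rewrite /= big1 // => i _.
  case: (ltnP i mx) => h; first by rewrite hx2 ?mul0r.
  rewrite hy2 ?mulr0 //; have := ltn_ord i; lia.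
- apply: deg_none_seq => n; rewrite /= big1 // => i _.
  by rewrite (deg_none_seq' ey) mulr0.
- apply: deg_none_seq => n; rewrite /= big1 // => i _.
  by rewrite (deg_none_seq' ex) mul0r.
- apply: deg_none_seq => n; rewrite /= big1 // => i _.
  by rewrite (deg_none_seq' ex) mul0r.
Qed.

Variable R : realType.
Let q : R := #|F|%:R.
Lemma q_gt1 : 1 < q.
Proof. by rewrite /q ltr1n card_finNzRing_gt1. Qed.
Lemma q_gt0 : 0 < q. Proof. exact: lt_trans q_gt1. Qed.
Lemma q_neq0 : q != 0. Proof. by rewrite gt_eqF // q_gt0. Qed.

Lemma absLS_eq x y : eqLS x y -> absLS R x = absLS R y.
Proof. by move=> h; rewrite /absLS (deg_eq h). Qed.

Lemma absLS_ge0 x : 0 <= absLS R x.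
Proof. rewrite /absLS; case: degLS => // v; exact/ltW/exprz_gt0/q_gt0. Qed.

Lemma abs0P x : absLS R x = 0 <-> eqLS x z0.
Proof.
rewrite /absLS; case e: degLS => [v|]; split => //.
- move=> h; exfalso; move: h; apply/eqP; rewrite gt_eqF //; exact/exprz_gt0/q_gt0.
- move=> h; move: (deg_eq h); rewrite e => /esym.
  by rewrite deg_none_seq // => i; rewrite seq_lcoef L_z0.
- move=> _ n; rewrite L_z0; exact: deg_none.
Qed.

Lemma abs_le x v : (forall n, v < n -> lcoef x n = 0) -> absLS R x <= q ^ v.
Proof.
move=> h; rewrite /absLS; case e: degLS => [w|]; last exact/ltW/exprz_gt0/q_gt0.
have [h1 _] := deg_some e; rewrite ler_eXz2l ?q_gt1 //; rewrite leNgt; apply/negP => hl.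
by move: h1; rewrite h ?eqxx.
Qed.

Lemma abs_ge x v : lcoef x v != 0 -> q ^ v <= absLS R x.
Proof.
move=> h; rewrite /absLS; case e: degLS => [w|]; last by move: h; rewrite deg_none ?eqxx.
have [_ h2] := deg_some e; rewrite ler_eXz2l ?q_gt1 //; rewrite leNgt; apply/negP => hl.
by move: h; rewrite h2 ?eqxx.
Qed.

Lemma abs_exact x v : lcoef x v != 0 -> (forall n, v < n -> lcoef x n = 0) -> absLS R x = q ^ v.
Proof. by move=> h1 h2; apply/eqP; rewrite eq_le abs_le // abs_ge. Qed.

Lemma abs_le_inv x v : absLS R x <= q ^ v -> forall n, v < n -> lcoef x n = 0.
Proof.
move=> h n hn; apply/eqP; apply/negP => /negP hx.
by have := le_trans (abs_ge hx) h; rewrite ler_eXz2l ?q_gt1 //; rewrite leNgt hn.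
Qed.

Lemma absM x y : absLS R (mulLS x y) = absLS R x * absLS R y.
Proof.
rewrite /absLS deg_mul; case: (degLS x) => [a|]; case: (degLS y) => [b|]; rewrite ?mul0r ?mulr0 //.
exact: expfzDr q_neq0.
Qed.

Lemma abs_opp x : absLS R (oppLS x) = absLS R x.
Proof.
rewrite /absLS; suff -> : degLS (oppLS x) = degLS x by [].
case e: (degLS x) => [v|].
  have [m [-> h1 h2]] := deg_some_seq e; rewrite (deg_seq (m := m)) //= ?oppr_eq0 //.
  by move=> i hi; rewrite h2 ?oppr0.
by apply: deg_none_seq => i /=; rewrite (deg_none_seq' e) oppr0.
Qed.

Lemma abs_cases x : absLS R x = 0 \/ exists b, absLS R x = q ^ b.
Proof. rewrite /absLS; case: degLS => [b|]; [right; by exists b | by left]. Qed.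

Lemma abs_add_le_aux x y : absLS R x <= absLS R y -> absLS R (addLS x y) <= Num.max (absLS R x) (absLS R y).
Proof.
move=> h.
have -> : Num.max (absLS R x) (absLS R y) = absLS R y by rewrite max_r.
case: (abs_cases y) => [y0|[b hb]].
  have hx0 : absLS R x = 0 by apply/eqP; rewrite eq_le absLS_ge0 andbT; rewrite y0 in h.
  have hx := proj1 (abs0P _) hx0; have hy := proj1 (abs0P _) y0.
  rewrite y0 le_eqVlt; apply/orP; left; apply/eqP/abs0P.
  by setoid_rewrite hx; setoid_rewrite hy; move=> n; rewrite L_add !L_z0 addr0.
rewrite hb; apply: abs_le => n hn; rewrite L_add.
rewrite (abs_le_inv (x := x) (v := b)) ?(abs_le_inv (x := y) (v := b)) ?addr0 ?hb //.
by rewrite -hb.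
Qed.

Lemma abs_add_le x y : absLS R (addLS x y) <= Num.max (absLS R x) (absLS R y).
Proof.
case: (boolP (absLS R x <= absLS R y)) => hl; first exact: abs_add_le_aux.
rewrite (absLS_eq (y := addLS y x)); last by move=> n; rewrite !L_add addrC.
rewrite maxC; apply: abs_add_le_aux; rewrite -ltNge in hl; exact: ltW.
Qed.

Lemma abs_sub_le x y : absLS R (subLS x y) <= Num.max (absLS R x) (absLS R y).
Proof. by rewrite -(abs_opp y); exact: abs_add_le. Qed.

Lemma abs_add_lt x y : absLS R y < absLS R x -> absLS R (addLS x y) = absLS R x.
Proof.
move=> h; apply/eqP; rewrite eq_le; apply/andP; split.
  by apply: le_trans (abs_add_le x y) _; rewrite ge_max lexx ltW.
have e : eqLS x (subLS (addLS x y) y) by ring.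
have := abs_sub_le (addLS x y) y; rewrite -(absLS_eq e) le_max => /orP[//|h'].
by move: h; rewrite ltNge h'.
Qed.

Lemma abs_poly_ge1 p : p != 0 -> 1 <= absLS R (polyLS p).
Proof.
move=> hp; have hs : (0 < size p)%N by rewrite size_poly_gt0.
have : lcoef (polyLS p) (size p).-1%:Z != 0.
  have h0 : (0 <= ((size p).-1)%:Z :> int) by [].
  by rewrite L_poly h0 absz_nat -lead_coefE lead_coef_eq0.
move=> /abs_ge; apply: le_trans; rewrite -(expr0z q) ler_eXz2l ?q_gt1 //.
Qed.

Lemma abs_polyXn (i : nat) : absLS R (polyLS (F:=F) 'X^i) <= q ^ i.
Proof.
apply: abs_le => n hn; rewrite L_poly coefXn; case: ifP => // h0.
suff -> : (`|n|%N == i) = false by [].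
apply/negbTE/eqP; lia.
Qed.

Lemma abs_cst (c : F) : c != 0 -> absLS R (cstLS c) = 1.
Proof.
move=> hc; rewrite -(expr0z q); apply: abs_exact.
  by rewrite L_poly coefC.
by move=> n hn; rewrite L_poly coefC; case: ifP => // _; case: ifP => //; lia.
Qed.

Lemma abs_cst_le (c : F) : absLS R (cstLS c) <= 1.
Proof. by case: (eqVneq c 0) => [->|/abs_cst ->//]; rewrite (proj2 (abs0P _)). Qed.

Lemma abs_exp x N : absLS R (expLS x N) = absLS R x ^+ N.
Proof.
elim: N => [|N IH]; first by rewrite expr0 abs_cst ?oner_neq0.
by rewrite /expLS iterS absM -/(expLS x N) IH exprS.
Qed.

Lemma kill E X Y c : eqLS E z0 -> eqLS X (addLS Y (mulLS c E)) -> eqLS X Y.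
Proof. move=> hE h; setoid_rewrite h; setoid_rewrite hE; ring. Qed.

Ltac polys := repeat (setoid_rewrite poly_add || setoid_rewrite poly_mul); rewrite /cstLS.

Lemma Ainv (a : {poly F}) (b : F) (d : nat) f alpha :
  eqLS (mulLS f f) (addLS (mulLS (polyLS a) f) (cstLS b)) ->
  absLS R (subLS (polyLS a) f) <= q ^ (- d%:Z) ->
  inAinf1 d f alpha ->
  exists u v, eqLS alpha (addLS (polyLS u) (mulLS (polyLS v) f)) /\
    absLS R (addLS (polyLS u) (mulLS (polyLS v) (subLS (polyLS a) f))) <= 1.
Proof.
move=> Hf Hfc; have E0 : eqLS (subLS (mulLS f f) (addLS (mulLS (polyLS a) f) (cstLS b))) z0.
  by setoid_rewrite Hf; ring.
elim.
- move=> c; exists c%:P, 0; split.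
    by setoid_rewrite poly0; rewrite /cstLS; ring.
  rewrite (absLS_eq (y := polyLS c%:P)); first exact: abs_cst_le.
  by setoid_rewrite poly0; ring.
- move=> i hi; exists 0, 'X^i; split.
    by setoid_rewrite poly0; ring.
  rewrite (absLS_eq (y := mulLS (polyLS 'X^i) (subLS (polyLS a) f))); last first.
    by setoid_rewrite poly0; ring.
  rewrite absM; apply: le_trans (ler_pM (absLS_ge0 _) (absLS_ge0 _) (abs_polyXn i) Hfc) _.
  rewrite -expfzDr ?q_neq0 // -(expr0z q) ler_eXz2l ?q_gt1 //; lia.
- move=> x y _ [u1 [v1 [e1 h1]]] _ [u2 [v2 [e2 h2]]]; exists (u1 + u2), (v1 + v2); split.
    by polys; setoid_rewrite e1; setoid_rewrite e2; ring.
  have e : eqLS (addLS (polyLS (u1 + u2)) (mulLS (polyLS (v1 + v2)) (subLS (polyLS a) f)))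
     (addLS (addLS (polyLS u1) (mulLS (polyLS v1) (subLS (polyLS a) f)))
            (addLS (polyLS u2) (mulLS (polyLS v2) (subLS (polyLS a) f)))).
    by polys; ring.
  rewrite (absLS_eq e); apply: le_trans (abs_add_le _ _) _; by rewrite ge_max h1 h2.
- move=> x y _ [u1 [v1 [e1 h1]]] _ [u2 [v2 [e2 h2]]].
  exists (u1 * u2 + v1 * v2 * b%:P), (u1 * v2 + u2 * v1 + v1 * v2 * a); split.
    setoid_rewrite e1; setoid_rewrite e2.
    apply: (kill (c := mulLS (polyLS v1) (polyLS v2)) E0).
    by polys; ring.
  have e : eqLS (addLS (polyLS (u1 * u2 + v1 * v2 * b%:P)) (mulLS (polyLS (u1 * v2 + u2 * v1 + v1 * v2 * a)) (subLS (polyLS a) f)))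
     (mulLS (addLS (polyLS u1) (mulLS (polyLS v1) (subLS (polyLS a) f)))
            (addLS (polyLS u2) (mulLS (polyLS v2) (subLS (polyLS a) f)))).
    apply: eqLS_sym; apply: (kill (c := mulLS (polyLS v1) (polyLS v2)) E0).
    by polys; ring.
  rewrite (absLS_eq e) absM.
  by rewrite -(mulr1 1) ler_pM ?absLS_ge0.
- move=> x y exy _ [u [v [e h]]]; exists u, v; split => //.
  by setoid_rewrite <- exy.
Qed.

Lemma inf_le_el (S : set R) (t : R) : (forall s : R, S s -> 0 <= s) -> S t -> inf S <= t.
Proof. move=> h St; apply: (ge_inf _) => //; exists 0 => s Ss; exact: h. Qed.

Lemma main (a : {poly F}) (b : F) (d : nat)
    (f fi alpha : LS F) (N l : nat) :
  a \is monic -> size a = d.+1 -> (0 < d)%N -> b != 0 ->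
  eqLS (mulLS f f) (addLS (mulLS (polyLS a) f) (cstLS b)) ->
  absLS R f = (#|F|%:R : R) ^+ d ->
  eqLS (mulLS f fi) (oneLS F) ->
  inAinf1 d f alpha -> ~ eqLS alpha (cstLS 0) ->
  (l < d)%N ->
  let q : R := #|F|%:R in
  let eps : R := q ^ (- ((d * N + l)%N)%:Z) in
  let delta : R := q ^ (- (d * N)%N%:Z) * eps in
  delta < (absLS R alpha)^-1 ->
  forall lam : {poly F}, Lam R f eps lam ->
    distLS R (mulLS alpha (mulLS (mulLS (expLS fi N) (sqrtD a f)) (polyLS lam)))
             (Lamhat R a f fi N eps)
    < absLS R alpha * delta.
Proof.
move=> Hmon Hsize Hd Hb Hf Habsf Hfi HA Hnz Hl q' eps delta _ lam Hlam.
rewrite -/q in Habsf.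
have E0 : eqLS (subLS (mulLS f f) (addLS (mulLS (polyLS a) f) (cstLS b))) z0.
  by setoid_rewrite Hf; ring.
pose Q := q ^+ d.
have Q1 : 1 < Q by rewrite exprn_egt1 ?q_gt1 // -lt0n.
have Q0 : 0 < Q by exact: lt_trans Q1.
have Qn0 : Q != 0 by rewrite gt_eqF.
pose fc := subLS (polyLS a) f.
have Hffc : eqLS (mulLS f fc) (cstLS (- b)).
  have h1 : eqLS (cstLS (-b)) (oppLS (cstLS b)) by rewrite /cstLS polyCN; exact: poly_opp.
  setoid_rewrite h1; rewrite /fc.
  apply: (kill (c := oppLS (oneLS F)) E0). ring.
have Afc : absLS R fc = Q^-1.
  have := absM f fc; rewrite (absLS_eq Hffc) abs_cst ?oppr_eq0 // Habsf -/Q => /esym h.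
  by apply: (mulfI Qn0); rewrite h divff.
have Hfc : absLS R fc <= q ^ (- d%:Z) by rewrite Afc -exprnN; exact: lexx.
have Asub : absLS R (subLS f fc) = Q.
  have hlt : absLS R (oppLS fc) < absLS R f.
    rewrite abs_opp Afc Habsf -/Q; apply: (lt_trans _ Q1); by rewrite invf_lt1.
  by rewrite /subLS (abs_add_lt hlt) Habsf.
have Hsq : eqLS (sqrtD a f) (subLS f fc).
  rewrite /sqrtD; case: ifP => h2.
    have E2 : eqLS (addLS (oneLS F) (oneLS F)) z0.
      apply: eqLS_sym; rewrite /z0 /cstLS -(eqP h2) mulr2n polyCD; exact: poly_add.
    apply: (kill (c := fc) E2); rewrite /fc. ring.
  have C2 : eqLS (cstLS (2%:R : F)) (addLS (oneLS F) (oneLS F)).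
    rewrite /cstLS mulr2n polyCD; exact: poly_add.
  setoid_rewrite C2; rewrite /fc; ring.
have Afi : absLS R fi = Q^-1.
  have := absM f fi; rewrite (absLS_eq Hfi) abs_cst ?oner_neq0 // Habsf -/Q => /esym h.
  by apply: (mulfI Qn0); rewrite h divff.
pose g := mulLS (expLS fi N) (sqrtD a f).
have Ag : absLS R g = Q^-1 ^+ N * Q by rewrite absM abs_exp Afi (absLS_eq Hsq) Asub.
have [u [v [e hconj]]] := Ainv Hf Hfc HA.
move: Hlam; rewrite /Lam /distA /= => Hlam.
have [r0 [P ->] hr0] : exists2 r0, (exists p : {poly F}, r0 = absLS R (subLS (mulLS (polyLS lam) f) (polyLS p))) & r0 < eps.
  apply: inf_lt Hlam; by exists (absLS R (subLS (mulLS (polyLS lam) f) (polyLS 0))), 0.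
pose r := subLS (mulLS (polyLS lam) f) (polyLS P).
have Ar : absLS R r < eps by [].
pose mu := u * lam + v * P.
pose alc := addLS (polyLS u) (mulLS (polyLS v) fc).
have Hmu : Lam R f eps mu.
  rewrite /Lam /distA /=.
  pose Qp := u * P + v * a * P + v * b%:P * lam.
  have hinf := @inf_le_el [set r : R | exists p : {poly F}, r = absLS R (subLS (mulLS (polyLS mu) f) (polyLS p))]
     (absLS R (subLS (mulLS (polyLS mu) f) (polyLS Qp))).
  apply: le_lt_trans (hinf _ _) _.
  - by move=> z [p ->]; exact: absLS_ge0.
  - by exists Qp.
  have e2 : eqLS (subLS (mulLS (polyLS mu) f) (polyLS Qp)) (mulLS r alc).
    apply: (kill (c := mulLS (polyLS v) (polyLS lam)) E0).
    rewrite /r /alc /fc /mu /Qp; polys; ring.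
  rewrite (absLS_eq e2) absM; apply: le_lt_trans Ar.
  by rewrite -[X in _ <= X]mulr1 ler_wpM2l ?absLS_ge0.
set x := mulLS alpha _.
pose y := mulLS (mulLS (expLS fi N) (sqrtD a f)) (polyLS mu).
have Hy : Lamhat R a f fi N eps y by exists mu.
have Hxy : eqLS (subLS x y) (mulLS g (mulLS (polyLS v) r)).
  rewrite /x /y /g /r /mu; setoid_rewrite e; polys; ring.
have Axy : absLS R (subLS x y) = Q^-1 ^+ N * Q * (absLS R (polyLS v) * absLS R r).
  by rewrite (absLS_eq Hxy) absM Ag absM.
have Aal : 0 < absLS R alpha.
  rewrite lt_def absLS_ge0 andbT; apply/eqP => /abs0P h; exact: Hnz.
have epos : 0 < eps by exact: exprz_gt0 q_gt0.
have dN : q ^ (- (d * N)%N%:Z) = Q^-1 ^+ N.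
  by rewrite -exprnN exprM exprVn.
rewrite /distLS.
have hinf := @inf_le_el [set r : R | exists y0, Lamhat R a f fi N eps y0 /\ r = absLS R (subLS x y0)]
   (absLS R (subLS x y)).
apply: le_lt_trans (hinf _ _) _.
- by move=> z [w [_ ->]]; exact: absLS_ge0.
- by exists y.
rewrite Axy /delta dN.
case: (eqVneq v 0) => [v0|vn0].
  rewrite v0 (proj2 (abs0P _) poly0) mul0r mulr0.
  by rewrite mulr_gt0 // mulr_gt0 // exprn_gt0 // invr_gt0.
have Av1 := abs_poly_ge1 vn0.
have Hvd : absLS R (polyLS v) * Q <= absLS R alpha.
  have e3 : eqLS (subLS alpha alc) (mulLS (polyLS v) (subLS f fc)).
    setoid_rewrite e; rewrite /alc; ring.
  have := abs_sub_le alpha alc; rewrite (absLS_eq e3) absM Asub => h.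
  have h1 : 1 < absLS R (polyLS v) * Q.
    by apply: (lt_le_trans Q1); rewrite -[X in X <= _]mul1r ler_wpM2r // ltW.
  move: h; rewrite le_max => /orP[//|h]; exfalso.
  have := lt_le_trans h1 (le_trans h hconj); by rewrite ltxx.
have Qn : 0 < Q^-1 ^+ N by rewrite exprn_gt0 // invr_gt0.
rewrite -mulrA (mulrA Q) [Q * _]mulrC [X in _ < X]mulrCA ltr_pM2l //.
apply: (@le_lt_trans _ _ (absLS R alpha * absLS R r)).
  by rewrite ler_wpM2r ?absLS_ge0.
by rewrite ltr_pM2l.
Qed.

End LSRing.

Unset Implicit Arguments.
Theorem lemma2 (F : finFieldType) (R : realType) (a : {poly F}) (b : F) (d : nat)
    (f fi alpha : LS F) (N l : nat) :
  a \is monic -> size a = d.+1 -> (0 < d)%N -> b != 0 ->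
  eqLS (mulLS f f) (addLS (mulLS (polyLS a) f) (cstLS b)) ->
  absLS R f = (#|F|%:R : R) ^+ d ->
  eqLS (mulLS f fi) (oneLS F) ->
  inAinf1 d f alpha -> ~ eqLS alpha (cstLS 0) ->
  (l < d)%N ->
  let q : R := #|F|%:R in
  let eps : R := q ^ (- ((d * N + l)%N)%:Z) in
  let delta : R := q ^ (- (d * N)%N%:Z) * eps in
  delta < (absLS R alpha)^-1 ->
  forall lam : {poly F}, Lam R f eps lam ->
    distLS R (mulLS alpha (mulLS (mulLS (expLS fi N) (sqrtD a f)) (polyLS lam)))
             (Lamhat R a f fi N eps)
    < absLS R alpha * delta.
Proof. exact: (@main F R a b d f fi alpha N l). Qed.
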